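(* Let $\{\rho_n\}_{n\ge1}$ be probability densities on $\mathbb{R}$ with $\rho_n\ge0$, $\int\rho_n=1$ and $\lim_{n\to\infty}\int_{|t|>\delta}\rho_n(t)\,dt=0$ for all $\delta>0$; for $v\in\mathbb{R}^N$ let $D_{n,v}w(x)=\int_{\mathbb{R}}\frac{w(x+tv)-w(x)}{t}\rho_n(t)\,dt$, and for a multi-index $\bar n=(n_1,\dots,n_N)$ let $\nabla_{\bar n}w(x)\in\mathbb{R}^N$ have components $D_{n_i,e_i}w(x)$ ($e_i$ the standard basis). Let $u\in C^1(\mathbb{R}^N)$, $x_0\in\mathbb{R}^N$, $R>0$, and let $\tilde u$ (obtained from $u$ via a smooth cutoff function) satisfy $\tilde u=u$ on the ball $B_R(x_0)$ and $\tilde u=0$ outside a compact set $K\supset B_R(x_0)$, with $\tilde u\in C^1_0(\mathbb{R}^N)$. Define $$r(x,x_0)=\tilde u(x)-\tilde u(x_0)-(x-x_0)^T\nabla u(x_0),\qquad r_{\bar n}(x,x_0)=\tilde u(x)-\tilde u(x_0)-(x-x_0)^T\nabla_{\bar n}\tilde u(x_0).$$ Then $r_{\bar n}(\cdot,x_0)\to r(\cdot,x_0)$ uniformly on $B_R(x_0)$ as $\min(\bar n)\to\infty$. Consequently the nonlocal Taylor approximant $A_{\bar n}(x)=\tilde u(x_0)+(x-x_0)^T\nabla_{\bar n}\tilde u(x_0)$ converges to the standard Taylor approximant $A(x)=\tilde u(x_0)+(x-x_0)^T\nabla u(x_0)$ uniformly on $B_R(x_0)$ as $\min(\bar n)\t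o\infty$.
   Context: $\min(\bar n)=\min_i n_i$. *)

(* Defs.v *)
From HB Require Import structures.
From mathcomp Require Import all_boot all_order all_algebra.
From mathcomp Require Import all_classical all_reals all_analysis.
Set Implicit Arguments. Unset Strict Implicit. Unset Printing Implicit Defensive.
Import Order.TTheory GRing.Theory Num.Theory.
Import numFieldNormedType.Exports.
Local Open Scope classical_set_scope.
Local Open Scope ring_scope.

Definition ebase {R : realType} {N : nat} (i : 'I_N) : 'rV[R]_N := delta_mx 0 i.

Definition dotv {R : realType} {N : nat} (a b : 'rV[R]_N) : R :=
  \sum_(i < N) a 0 i * b 0 i.

Definition eball {R : realType} {N : nat} (x0 : 'rV[R]_N) (r : R) : set 'rV[R]_N :=
  [set x | \sum_(i < N) (x 0 i - x0 0 i) ^+ 2 < r ^+ 2].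

Definition grad {R : realType} {N : nat} (u : 'rV[R]_N -> R) (x : 'rV[R]_N) : 'rV[R]_N :=
  \row_(i < N) 'D_(ebase i) u x.

Definition C1 {R : realType} {N : nat} (u : 'rV[R]_N -> R) : Prop :=
  (forall (i : 'I_N) (x : 'rV[R]_N), derivable u x (ebase i)) /\
  (forall i : 'I_N, continuous (fun x => 'D_(ebase i) u x)).

Definition nl_deriv {R : realType} {N : nat} (rho : R -> R) (v : 'rV[R]_N)
  (w : 'rV[R]_N -> R) (x : 'rV[R]_N) : R :=
  Rintegral (@lebesgue_measure R) setT (fun t => (w (x + t *: v) - w x) / t * rho t).

Definition nl_grad {R : realType} {N : nat} (rho : nat -> R -> R) (nbar : 'I_N -> nat)
  (w : 'rV[R]_N -> R) (x : 'rV[R]_N) : 'rV[R]_N :=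
  \row_(i < N) nl_deriv (rho (nbar i)) (ebase i) w x.

(* Main.v *)
Require Import Defs.
From HB Require Import structures.
From mathcomp Require Import all_boot all_order all_algebra.
From mathcomp Require Import all_classical all_reals all_analysis.
From mathcomp Require Import measurable_realfun.
From mathcomp Require Import ring lra.
Import Order.TTheory GRing.Theory Num.Theory.
Import numFieldNormedType.Exports.
Local Open Scope classical_set_scope.
Local Open Scope ring_scope.
Local Notation mu := lebesgue_measure.

Lemma measS (R : realType) (delta : R) : measurable [set t : R | delta < `|t|].
Proof.
have := @measurable_realfun.normr_measurable R setT measurableT _ (@measurable_itv _ `]delta, +oo[).
by rewrite setTI; congr measurable; apply/seteqP; split => t /=; rewrite in_itv /= andbT.
Qed.

Lemma bnd_of (R : realType) (D : set R) (h : R -> R) (c : R) :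
  (forall t, D t -> `|h t| <= c) -> [bounded h x | x in D].
Proof.
move=> hc; rewrite /bounded_near.
have cr : c \is Num.real by [].
apply: filterS (nbhs_pinfty_ge cr) => M cM x Dx /=.
exact: le_trans (hc x Dx) cM.
Qed.

Arguments bnd_of {R D h c}.

Lemma intM (R : realType) (rho h : R -> R) (D0 : set R) (c : R) : measurable D0 ->
  measurable_fun D0 h -> (forall t, D0 t -> `|h t| <= c) ->
  mu.-integrable D0 (EFin \o rho) -> mu.-integrable D0 (EFin \o (fun t => h t * rho t)).
Proof.
move=> mD0 mh bh ir.
have := @integrableMr _ _ _ mu D0 mD0 h (EFin \o rho) mh (bnd_of bh) ir.
by apply: eq_integrable => //.
Qed.

Lemma intS (R : realType) (D : set R) (f : R -> \bar R) : measurable D ->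
  mu.-integrable (setT : set R) f -> mu.-integrable D f.
Proof. by move=> mD; apply: integrableS. Qed.
Arguments intS {R D f}.

Arguments intM {R rho h D0 c}.

Lemma normRi (R : realType) (D : set R) (f : R -> R) : measurable D ->
  mu.-integrable D (EFin \o f) ->
  `|Rintegral mu D f| <= Rintegral mu D (fun t => `|f t|).
Proof. by move=> mD fi; apply: le_normr_Rintegral. Qed.

Lemma leRi (R : realType) (D : set R) (f g : R -> R) : measurable D ->
  mu.-integrable D (EFin \o f) -> mu.-integrable D (EFin \o g) ->
  (forall x, D x -> f x <= g x) ->
  Rintegral mu D f <= Rintegral mu D g.
Proof. by move=> mD fi gi fg; apply: le_Rintegral. Qed.
Arguments normRi {R D f}.
Arguments leRi {R D f g}.

Lemma key1 (R : realType) (rho : R -> R) (mrho : measurable_fun setT rho)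
  (rho0 : forall t, 0 <= rho t)
  (rho1 : (\int[@lebesgue_measure R]_(t in setT) (rho t)%:E = 1)%E)
  (G : R -> R) (d eps delta K : R) (mG : measurable_fun (setT `\ (0:R)) G)
  (eps0 : 0 <= eps) (K0 : 0 <= K)
  (hnear : forall t, t != 0 -> `|t| <= delta -> `|G t - d| <= eps)
  (hfar : forall t, delta < `|t| -> `|G t - d| <= K) :
  `|Rintegral (@lebesgue_measure R) setT (fun t => G t * rho t) - d|
    <= eps + K * Rintegral (@lebesgue_measure R) [set t | delta < `|t|] rho.
Proof.

set D0 := setT `\ (0:R).
set S := [set t : R | delta < `|t|].
have mD0 : measurable D0 by apply: measurableD.
have mS : measurable S by exact: measS.
have irT : mu.-integrable (setT : set R) (EFin \o rho).
  apply/integrableP; split; first exact/measurable_EFinP.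
  under eq_integral do rewrite /= ger0_norm//.
  by rewrite rho1 ltry.
have irD : mu.-integrable D0 (EFin \o rho) by exact: intS mD0 irT.
have R1 : Rintegral mu D0 rho = 1.
  rewrite /Rintegral integral_setD1 ?rho1 //.
  exact/measurable_funTS/measurable_EFinP.
have bG : forall t, D0 t -> `|G t - d| <= eps + K.
  move=> t [_ /eqP t0]; have [tS|tS] := leP `|t| delta.
  - by rewrite (le_trans (hnear t t0 tS)) // lerDl.
  - by rewrite (le_trans (hfar t tS)) // lerDr.
have mGd : measurable_fun D0 (fun t => G t - d).
  by apply: measurable_funB => //; exact: measurable_cst.
have iGd : mu.-integrable D0 (EFin \o (fun t => (G t - d) * rho t)).
  exact: (intM mD0 mGd bG irD).
have iaGd : mu.-integrable D0 (EFin \o (fun t => `|G t - d| * rho t)).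
  have mh : measurable_fun D0 (fun t => `|G t - d|) by exact: measurableT_comp.
  have bh : forall t, D0 t -> `| `|G t - d| | <= eps + K by move=> t Dt; rewrite normr_id bG.
  exact: (intM mD0 mh bh irD).
have mI : measurable_fun D0 (fun t => eps + K * \1_S t).
  apply: measurable_funD; first exact: measurable_cst.
  by apply: measurable_funM; [exact: measurable_cst|exact: measurable_indic].
have bI : forall t, D0 t -> `|eps + K * \1_S t| <= eps + K.
  move=> t _; rewrite ger0_norm; last by rewrite addr_ge0 // mulr_ge0.
  rewrite lerD2l indicE; case: (t \in S); by rewrite ?mulr1 ?mulr0.
have iB : mu.-integrable D0 (EFin \o (fun t => (eps + K * \1_S t) * rho t)).
  exact: (intM mD0 mI bI irD).
have mIS : measurable_fun D0 (fun t => \1_S t * rho t).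
  by apply: measurable_funM; [exact: measurable_indic|exact: measurable_funTS].
have iIS : mu.-integrable D0 (EFin \o (fun t => \1_S t * rho t)).
  have bS : forall t, D0 t -> `|(\1_S t : R)| <= 1.
    by move=> t _; rewrite indicE; case: (t \in S); rewrite ?normr1 ?normr0.
  have mIi : measurable_fun D0 (\1_S : R -> R) by exact: measurable_indic.
  exact: (intM mD0 mIi bS irD).
have mGr : measurable_fun D0 (fun t => G t * rho t).
  by apply: measurable_funM => //; exact: measurable_funTS.
have -> : Rintegral mu setT (fun t => G t * rho t) = Rintegral mu D0 (fun t => G t * rho t).
  by rewrite /Rintegral integral_setD1 //; exact/measurable_EFinP.
have -> : d = Rintegral mu D0 (fun t => d * rho t) by rewrite RintegralZl // R1 mulr1.
have iGr : mu.-integrable D0 (EFin \o (fun t => G t * rho t)).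
  have bG' : forall t, D0 t -> `|G t| <= `|d| + (eps + K).
    move=> t Dt; rewrite -[G t](subrK d) (le_trans (ler_normD _ _)) //.
    by rewrite addrC lerD2l bG.
  exact: (intM mD0 mG bG' irD).
have idr : mu.-integrable D0 (EFin \o (fun t => d * rho t)).
  exact: (intM mD0 (measurable_cst d) (fun t (_ : D0 t) => lexx `|d|) irD).
rewrite -RintegralB //.
rewrite (@eq_Rintegral _ _ _ mu D0 (fun t => (G t - d) * rho t)); last first.
  by move=> t _; rewrite mulrBl.
apply: le_trans (normRi mD0 iGd) _.
rewrite (@eq_Rintegral _ _ _ mu D0 (fun t => `|G t - d| * rho t)); last first.
  by move=> t _; rewrite normrM (ger0_norm (rho0 t)).
apply: le_trans (leRi mD0 iaGd iB _) _.
  move=> t Dt; rewrite ler_wpM2r // indicE.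
  case: (boolP (t \in S)) => tS; rewrite ?mulr1 ?mulr0 ?addr0.
  - by rewrite (le_trans (hfar t _)) ?lerDr //; rewrite inE in tS.
  - case: Dt => _ /eqP t0; apply: (hnear t t0).
    by rewrite leNgt; apply/negP => h; move/negP: tS; apply; rewrite inE.
rewrite (@eq_Rintegral _ _ _ mu D0 (fun t => eps * rho t + K * (\1_S t * rho t))); last first.
  by move=> t _; rewrite mulrDl mulrA.
have ieps : mu.-integrable D0 (EFin \o (fun t => eps * rho t)).
  exact: (intM mD0 (measurable_cst eps) (fun t (_ : D0 t) => lexx `|eps|) irD).
have iKS : mu.-integrable D0 (EFin \o (fun t => K * (\1_S t * rho t))).
  exact: (intM mD0 (measurable_cst K) (fun t (_ : D0 t) => lexx `|K|) iIS).
rewrite RintegralD // RintegralZl // RintegralZl // R1 mulr1 lerD2l.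
rewrite ler_wpM2l //.
have -> : Rintegral mu D0 (fun t => \1_S t * rho t) = Rintegral mu setT (fun t => \1_S t * rho t).
  by rewrite /Rintegral integral_setD1 //; exact/measurable_EFinP.
rewrite [leRHS]Rintegral_mkcond.
rewrite le_eqVlt; apply/orP; left; apply/eqP; apply: eq_Rintegral => t _; rewrite /patch indicE.
by case: (t \in S); rewrite ?mul1r ?mul0r.
Qed.

Lemma key2 (R : realType) (rho : nat -> R -> R)
  (rho_meas : forall n, measurable_fun setT (rho n))
  (rho_ge0 : forall n t, 0 <= rho n t)
  (rho_int1 : forall n, (\int[@lebesgue_measure R]_(t in setT) (rho n t)%:E = 1)%E)
  (rho_tail : forall delta : R, 0 < delta ->
     (fun n => (\int[@lebesgue_measure R]_(t in [set t : R | (delta < `|t|)%R]) (rho n t)%:E)%E)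
       @ \oo --> 0%E)
  (f : R -> R) (fc : continuous f) (C : R) (fC : forall t, `|f t| <= C) (d : R)
  (fd : (fun h => h^-1 * (f h - f 0)) @ 0^' --> d) :
  forall eps, 0 < eps -> exists M, forall n, (M <= n)%N ->
   `|Rintegral (@lebesgue_measure R) setT (fun t => (f t - f 0) / t * rho n t) - d| < eps.
Proof.
move=> eps eps0.
set G := fun t => (f t - f 0) / t.
have C0 : 0 <= C by apply: le_trans (fC 0).
have mG : measurable_fun (setT `\ (0:R)) G.
  apply: open_continuous_measurable_fun.
    rewrite setTD; apply: closed_openC; apply: accessible_closed_set1.
    exact/hausdorff_accessible/Rhausdorff.
  move=> t; rewrite inE => -[_ /eqP t0].
  rewrite /G; apply: cvgM; first by apply: cvgB; [exact: fc | exact: cvg_cst].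
  by apply: cvgV => //; exact: cvg_id.
have e20 : 0 < eps / 2 by rewrite divr_gt0.
move/cvgrPdist_le: fd => /(_ (eps / 2) e20) [del /= del0 H].
set dl := del / 2.
have dl0 : 0 < dl by rewrite divr_gt0.
have hnear : forall t, t != 0 -> `|t| <= dl -> `|G t - d| <= eps / 2.
  move=> t t0 tl; rewrite distrC /G mulrC; apply: H => //=.
  rewrite sub0r normrN (le_lt_trans tl) // /dl ltr_pdivrMr // ltr_pMr //.
  by rewrite ltr1n.
set K := 2 * C / dl + `|d|.
have K0 : 0 <= K by rewrite addr_ge0 // divr_ge0 // ?mulr_ge0 // ltW.
have hfar : forall t, dl < `|t| -> `|G t - d| <= K.
  move=> t tl; have t0 : 0 < `|t| by apply: lt_trans tl.
  rewrite (le_trans (ler_normB _ _)) // lerD2r /G normrM normfV.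
  rewrite ler_pdivrMr // (le_trans (ler_normB _ _)) //.
  apply: le_trans (lerD (fC t) (fC 0)) _.
  rewrite -mulr2n -[C *+ 2]mulr_natl -!mulrA ler_wpM2l // ler_peMr //.
  by rewrite mulrC ler_pdivlMr // mul1r ltW.
set e3 := eps / 2 / (K + 1).
have e30 : 0 < e3 by rewrite divr_gt0 // ltr_wpDl.
have Ht : (fine \o (fun n => (\int[@lebesgue_measure R]_(t in [set t : R | (dl < `|t|)%R]) (rho n t)%:E)%E)) @ \oo --> (0:R).
  by apply: fine_cvg; exact: rho_tail.
move/cvgrPdist_lt: Ht => /(_ e3 e30) [M _ HM].
exists M => n Mn.
have := @key1 R (rho n) (rho_meas n) (rho_ge0 n) (rho_int1 n) G d (eps / 2) dl K mG (ltW e20) K0 hnear hfar.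
move/le_lt_trans; apply.
rewrite [X in _ < X](splitr eps) ltrD2l.
have := HM n Mn; rewrite /= sub0r normrN.
set I := fine _ => HI.
have -> : Rintegral lebesgue_measure [set t | dl < `|t|] (rho n) = I by [].
have I0 : 0 <= I by apply: fine_ge0; apply: integral_ge0 => t _; rewrite lee_fin.
rewrite ger0_norm // in HI.
have [->|Kp] := eqVneq K 0; first by rewrite mul0r.
apply: le_lt_trans (_ : K * e3 < _).
  by rewrite ler_wpM2l // ltW.
rewrite /e3 mulrCA gtr_pMr //.
by rewrite ltr_pdivrMr ?mul1r ?ltrDl // ltr_wpDl.
Qed.

Lemma entry_le (R : realType) n (x : 'rV[R]_n) (i : 'I_n) : `|x 0 i| <= `|x|.
Proof.
change (`|x 0 i| <= mx_norm x); rewrite mx_normrE.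
exact: (le_bigmax _ (fun ij : 'I_1 * 'I_n => `|x ij.1 ij.2|) (0, i)).
Qed.

Lemma entry_line (R : realType) n (x0 : 'rV[R]_n) (i : 'I_n) (t : R) :
  (x0 + t *: ebase i) 0 i = x0 0 i + t.
Proof. by rewrite /ebase !mxE !eqxx /= mulr1. Qed.

Lemma fbound (R : realType) N (ut : 'rV[R]_N -> R) (K : set 'rV[R]_N)
  (Kc : compact K) (Ks : forall x, ~ K x -> ut x = 0) (x0 : 'rV[R]_N) (i : 'I_N)
  (fc : continuous (fun t : R => ut (x0 + t *: ebase i))) :
  exists C, forall t, `|ut (x0 + t *: ebase i)| <= C.
Proof.
set f := fun t : R => ut (x0 + t *: ebase i).
have := compact_bounded Kc; rewrite /bounded_set /bounded_near.
case=> M [Mr HM].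
have HB : forall x, K x -> `|x| <= `|M| + 1.
  move=> x Kx; apply: le_trans (HM (M + 1) _ x Kx) _; first by rewrite ltrDl.
  by rewrite lerD2r ler_norm.
set T := `|M| + 1 + `|x0 0 i|.
have T0 : 0 <= T by rewrite !addr_ge0.
have nTT : - T <= T by rewrite (le_trans _ T0) // oppr_le0.
have cg : {within `[- T, T], continuous (fun t => `|f t|)}.
  apply: continuous_subspaceT => t.
  exact: (continuous_comp (fc t) (@norm_continuous _ _ (f t))).
have [c cT Hc] := EVT_max nTT cg.
exists `|f c| => t.
have [tT|tT] := leP `|t| T.
  by apply: Hc; rewrite in_itv /= -ler_norml.
rewrite /f Ks ?normr0 //.
move=> Kx; have := HB _ Kx; apply/negP; rewrite -ltNge.
apply: (lt_le_trans _ (@entry_le R N (x0 + t *: ebase i) i)); rewrite entry_line (addrC (x0 0 i)).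
apply: (lt_le_trans _ (lerB_normD t (x0 0 i))).
by rewrite ltrBrDr.
Qed.

Lemma sq_lt (R : realType) (a r : R) : 0 < r -> a ^+ 2 < r ^+ 2 -> `|a| < r.
Proof.
move=> r0 h; rewrite -(@ltr_pXn2r _ 2) // ?nnegrE ?ltW //.
by rewrite real_normK ?num_real.
Qed.

Lemma coord_lt (R : realType) N (x x0 : 'rV[R]_N) (r : R) : 0 < r ->
  eball x0 r x -> forall i, `|x 0 i - x0 0 i| < r.
Proof.
move=> r0 h i; apply: sq_lt => //; apply: le_lt_trans h.
rewrite (bigD1 i) //= lerDl sumr_ge0 // => j _; exact: sqr_ge0.
Qed.

Lemma dotvB (R : realType) N (a b c : 'rV[R]_N) :
  dotv a (b - c) = dotv a b - dotv a c.
Proof.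
rewrite /dotv -sumrB; apply: eq_bigr => j _; by rewrite !mxE mulrBr.
Qed.

Lemma dot_bound (R : realType) N (a b : 'rV[R]_N) (A B : R) :
  (forall i, `|a 0 i| <= A) -> (forall i, `|b 0 i| <= B) ->
  `|dotv a b| <= N%:R * (A * B).
Proof.
move=> hA hB; rewrite /dotv; apply: (le_trans (ler_norm_sum _ _ _)).
apply: (le_trans (@ler_sum _ _ _ _ _ (fun _ => A * B) _)).
  by move=> j _; rewrite normrM ler_pM.
by rewrite sumr_const card_ord mulr_natl.
Qed.

Lemma near_ball (R : realType) N (x0 : 'rV[R]_N) (r : R) : 0 < r ->
  \forall y \near x0, eball x0 r y.
Proof.
move=> r0; apply/nbhs_ballP.
have N10 : 0 < N%:R + 1 :> R by rewrite ltr_wpDl.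
set rh := r / (N%:R + 1).
have rh0 : 0 < rh by rewrite divr_gt0.
exists rh => // y; rewrite -ball_normE /= => hy.
rewrite /eball /=.
have hj : forall j, (y 0 j - x0 0 j) ^+ 2 <= rh ^+ 2.
  move=> j; rewrite -real_normK ?num_real // !expr2.
  have : `|y 0 j - x0 0 j| <= rh.
    rewrite distrC; apply: le_trans (ltW hy).
    by have := @entry_le R N (x0 - y) j; rewrite !mxE.
  by move=> h; rewrite ler_pM.
apply: (le_lt_trans (@ler_sum _ _ _ _ _ (fun _ => rh ^+ 2) _)).
  by move=> j _; exact: hj.
rewrite sumr_const card_ord -mulr_natl.
have e : rh * (N%:R + 1) = r by rewrite /rh divfK // gt_eqF.
have N0 : 0 <= N%:R :> R by [].
nra.
Qed.

Lemma key3 (R : realType) (N : nat) (rho : nat -> R -> R)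
  (rho_meas : forall n, measurable_fun setT (rho n))
  (rho_ge0 : forall n t, 0 <= rho n t)
  (rho_int1 : forall n, (\int[@lebesgue_measure R]_(t in setT) (rho n t)%:E = 1)%E)
  (rho_tail : forall delta : R, 0 < delta ->
     (fun n => (\int[@lebesgue_measure R]_(t in [set t : R | (delta < `|t|)%R]) (rho n t)%:E)%E)
       @ \oo --> 0%E)
  (ut : 'rV[R]_N -> R) (ut_C1 : C1 ut) (K : set 'rV[R]_N)
  (Kc : compact K) (Ks : forall x, ~ K x -> ut x = 0) (x0 : 'rV[R]_N) (i : 'I_N) :
  forall eps, 0 < eps -> exists M, forall n, (M <= n)%N ->
   `|nl_deriv (rho n) (ebase i) ut x0 - 'D_(ebase i) ut x0| < eps.
Proof.
move=> eps eps0.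
set e : 'rV[R]_N := ebase i.
set f := fun t : R => ut (x0 + t *: e).
have f0 : f 0 = ut x0 by rewrite /f scale0r addr0.
have fc : continuous f.
  move=> t; have := ut_C1.1 i (x0 + t *: e); move/derivable1P => H.
  have : derivable f t 1.
    apply/derivable1P.
    have -> : (fun h : R => f (h *: 1 + t)) = (fun h => ut (h *: e + (x0 + t *: e))).
      apply/funext => h; rewrite /f; congr ut.
      by rewrite scaler1 scalerDl addrCA addrA.
    exact: H.
  by move/derivable1_diffP/differentiable_continuous.
have [C fC] := @fbound R N ut K Kc Ks x0 i fc.
have fd : (fun h => h^-1 * (f h - f 0)) @ 0^' --> 'D_e ut x0.
  have H : (fun h : R => h^-1 *: ((ut \o shift x0) (h *: e) - ut x0)) @ 0^' --> 'D_e ut x0.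
    exact: (ut_C1.1 i x0).
  have -> : (fun h => h^-1 * (f h - f 0)) = (fun h : R => h^-1 *: ((ut \o shift x0) (h *: e) - ut x0)).
    by apply/funext => h; rewrite f0 /f /= (addrC x0).
  exact: H.
have := @key2 R rho rho_meas rho_ge0 rho_int1 rho_tail f fc C fC _ fd eps eps0.
case=> M HM; exists M => n Mn; have := HM n Mn.
by rewrite f0.
Qed.

Theorem theorem7 (R : realType) (N : nat) (rho : nat -> R -> R)
  (rho_meas : forall n, measurable_fun setT (rho n))
  (rho_ge0 : forall n t, 0 <= rho n t)
  (rho_int1 : forall n, (\int[@lebesgue_measure R]_(t in setT) (rho n t)%:E = 1)%E)
  (rho_tail : forall delta : R, 0 < delta ->
     (fun n => (\int[@lebesgue_measure R]_(t in [set t : R | (delta < `|t|)%R]) (rho n t)%:E)%E)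
       @ \oo --> 0%E)
  (u ut : 'rV[R]_N -> R) (x0 : 'rV[R]_N) (r : R)
  (u_C1 : C1 u) (r_gt0 : 0 < r)
  (ut_C1 : C1 ut)
  (ut_eq : forall x, eball x0 r x -> ut x = u x)
  (ut_supp : exists K : set 'rV[R]_N,
      compact K /\ eball x0 r `<=` K /\ (forall x, ~ K x -> ut x = 0)) :
  let rr := fun x => ut x - ut x0 - dotv (x - x0) (grad u x0) in
  let rn := fun (nbar : 'I_N -> nat) x =>
              ut x - ut x0 - dotv (x - x0) (nl_grad rho nbar ut x0) in
  let A := fun x => ut x0 + dotv (x - x0) (grad u x0) in
  let An := fun (nbar : 'I_N -> nat) x => ut x0 + dotv (x - x0) (nl_grad rho nbar ut x0) in
  (forall eps : R, 0 < eps -> exists M : nat, forall nbar : 'I_N -> nat,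
      (forall i, (M <= nbar i)%N) ->
      forall x, eball x0 r x -> `|rn nbar x - rr x| < eps) /\
  (forall eps : R, 0 < eps -> exists M : nat, forall nbar : 'I_N -> nat,
      (forall i, (M <= nbar i)%N) ->
      forall x, eball x0 r x -> `|An nbar x - A x| < eps).
Proof.
move=> rr rn A An.
case: ut_supp => K [Kc [Kb Ks]].
have dE : forall i, 'D_(ebase i) u x0 = 'D_(ebase i) ut x0.
  move=> i; apply: near_eq_derive.
  have := @near_ball R N x0 r r_gt0; apply: filterS => y hy.
  by rewrite ut_eq.
have main : forall eps, 0 < eps -> exists M, forall nbar : 'I_N -> nat,
    (forall i, (M <= nbar i)%N) -> forall x, eball x0 r x ->
    `|dotv (x - x0) (nl_grad rho nbar ut x0 - grad u x0)| < eps.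
  move=> eps eps0.
  set e' := eps / (N%:R * r + 1).
  have Nr0 : 0 < N%:R * r + 1 by rewrite ltr_wpDl // mulr_ge0 // ltW.
  have e'0 : 0 < e' by rewrite divr_gt0.
  have H : forall i, exists M, forall n, (M <= n)%N ->
      `|nl_deriv (rho n) (ebase i) ut x0 - 'D_(ebase i) ut x0| < e'.
    move=> i; exact: (@key3 R N rho rho_meas rho_ge0 rho_int1 rho_tail ut ut_C1 K Kc Ks x0 i e' e'0).
  have [Mf HMf] := fin_all_exists H.
  exists (\max_i Mf i) => nbar hn x hx.
  apply: (le_lt_trans (@dot_bound R N _ _ r e' _ _)).
  - move=> i; rewrite !mxE; apply: ltW; exact: coord_lt.
  - move=> i; rewrite !mxE dE; apply: ltW; apply: HMf.
    by apply: leq_trans (hn i); exact: leq_bigmax.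
  - rewrite /e' mulrA mulrCA gtr_pMr // ltr_pdivrMr // mul1r.
    by rewrite ltrDl.
split.
- move=> eps eps0; have [M HM] := main eps eps0; exists M => nbar hn x hx.
  have -> : rn nbar x - rr x = - (dotv (x - x0) (nl_grad rho nbar ut x0 - grad u x0)).
    by rewrite dotvB /rn /rr; ring.
  by rewrite normrN; apply: HM.
- move=> eps eps0; have [M HM] := main eps eps0; exists M => nbar hn x hx.
  have -> : An nbar x - A x = dotv (x - x0) (nl_grad rho nbar ut x0 - grad u x0).
    by rewrite dotvB /An /A; ring.
  by apply: HM.
Qed.
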